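(* Let $p_1\in \mathbb{P}^2$ and let $p_2$ be a point which is either in the first neighbourhood of $p_1$ or a distinct point of $\mathbb{P}^2$. Then there exist a morphism $\nu\colon\mathbb{A}^1\to \mathrm{Bir}(\mathbb{P}^2)$ and a morphism $p_3\colon \mathbb{A}^1\to \mathbb{P}^2$ such that: $(1)$ for $t\not=0$, $\nu(t)$ is a quadratic map with base-points $p_1,p_2,p_3(t)$; $(2)$ the map $\nu(0)$ is the identity and $p_3(0)$ is collinear with $p_1$ and $p_2$.
   Context: Work over an algebraically closed field of characteristic $0$. $\mathrm{Bir}(\mathbb{P}^2)$ is the group of birational transformations of $\mathbb{P}^2$. A morphism $A\to\mathrm{Bir}(\mathbb{P}^2)$ from an irreducible variety $A$ is a family in the sense of Demazure: an $A$-birational map $f$ of $A\times\mathbb{P}^2$, $(a,x)\dashrightarrow(a,p_2(f(a,x)))$, inducing an isomorphism between open subsets surjecting onto $A$, with $a\mapsto f_a$. A quadratic map is a birational map of degree $2$. *)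

(* Defs.v *)
From HB Require Import structures.
From mathcomp Require Import all_boot all_order all_algebra.
From mathcomp Require Import mpoly.
Set Implicit Arguments. Unset Strict Implicit. Unset Printing Implicit Defensive.
Import Order.TTheory GRing.Theory.
Local Open Scope ring_scope.

Section Cremona.
Variable k : closedFieldType.

(* Homogeneous coordinates: a point of P^2 is a nonzero vector of k^3
   (taken up to scalars); a line is a nonzero linear form a0 x0+a1 x1+a2 x2. *)
Definition vec3 := 'I_3 -> k.
Definition nonzero3 (v : vec3) : Prop := exists i, v i != 0.
Definition proj_eq (u v : vec3) : Prop := exists c : k, c != 0 /\ forall i, u i = c * v i.
Definition pairing (a v : vec3) : k := \sum_(i < 3) a i * v i.
Definition on_line (a v : vec3) : Prop := pairing a v = 0.

(* Points of the bubble space used here: a proper point of P^2, or a point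
   in the first neighbourhood of a given point p, i.e. a tangent direction
   at p, encoded by the line through p having that direction. *)
Inductive bpoint := Proper of vec3 | InfNear of vec3 .

Definition first_nbhd_or_distinct (p1 : vec3) (p2 : bpoint) : Prop :=
  match p2 with
  | Proper q => nonzero3 q /\ ~ proj_eq q p1
  | InfNear a => nonzero3 a /\ on_line a p1
  end.

Definition passes_through (p1 : vec3) (Q : {mpoly k[3]}) (b : bpoint) : Prop :=
  match b with
  | Proper q => Q.@[q] = 0
  | InfNear a => Q.@[p1] = 0 /\
      forall q : vec3, on_line a q -> \sum_(i < 3) q i * (mderiv i Q).@[p1] = 0
  end.

Definition distinct_from (q : vec3) (b : bpoint) : Prop :=
  match b with
  | Proper r => ~ proj_eq q r
  | InfNear _ => True
  end.

(* Rational self-maps of P^2 given by triples of homogeneous polynomials. *)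
Definition pmap := 'I_3 -> {mpoly k[3]}.
Definition homog_map (d : nat) (f : pmap) : Prop := forall i, f i \is d.-homog.
Definition compm (g f : pmap) : pmap := fun i => g i \mPo [tuple f j | j < 3].

Definition is_identity_map (f : pmap) : Prop :=
  exists h : {mpoly k[3]}, h != 0 /\ forall i, f i = h * 'X_i.

Definition birational_pair (f g : pmap) : Prop :=
  (exists i, f i != 0) /\ (exists i, g i != 0) /\
  is_identity_map (compm g f) /\ is_identity_map (compm f g).

Definition coprime3 (Q : pmap) : Prop :=
  forall r : {mpoly k[3]}, (forall i, exists s, Q i = r * s) -> (msize r <= 1)%N.

(* f is a quadratic map (birational map of degree 2, birationality being
   part of the family hypothesis) whose base points are p1, p2, p3:
   the reduced representative Q of f consists of coprime quadrics, all of
   which pass through the three distinct (bubble) points p1, p2, p3.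
   (A quadratic map has exactly three base points, so these are all.) *)
Definition quadratic_with_base_points (f : pmap) (p1 : vec3) (p2 : bpoint)
    (p3 : vec3) : Prop :=
  exists (c : {mpoly k[3]}) (Q : pmap),
    [/\ c != 0, homog_map 2 Q, coprime3 Q, forall i, f i = c * Q i &
    [/\ forall i, passes_through p1 (Q i) (Proper p1),
        forall i, passes_through p1 (Q i) p2,
        forall i, passes_through p1 (Q i) (Proper p3),
        ~ proj_eq p3 p1 & distinct_from p3 p2]].

(* Families over A^1: polynomials in t with coefficients in k[x0,x1,x2]. *)
Definition fpmap := 'I_3 -> {poly {mpoly k[3]}}.
Definition fiber (F : fpmap) (t : k) : pmap := fun i => (F i).[t%:MP].

(* A morphism A^1 -> Bir(P^2): an A^1-birational map of A^1 x P^2, given by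
   polynomials F (homogeneous of a fixed degree d in x) with inverse G
   (homogeneous of degree e in x), restricting to a birational map on each
   fibre (so it is an isomorphism between open sets surjecting onto A^1). *)
Definition bir_family (F G : fpmap) : Prop :=
  exists d e : nat,
    [/\ forall i j, (F i)`_j \is d.-homog,
        forall i j, (G i)`_j \is e.-homog &
        forall t : k, birational_pair (fiber F t) (fiber G t)].

(* A morphism A^1 -> P^2: polynomials without common zero. *)
Definition vfamily := 'I_3 -> {poly k}.
Definition morph_A1_P2 (P : vfamily) : Prop := forall t : k, exists i, (P i).[t] != 0.
Definition vfiber (P : vfamily) (t : k) : vec3 := fun i => (P i).[t].

Definition collinear3 (p1 : vec3) (p2 : bpoint) (p3 : vec3) : Prop :=
  match p2 with
  | Proper q => exists a, nonzero3 a /\ on_line a p1 /\ on_line a q /\ on_line a p3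
  | InfNear a => on_line a p3
  end.

End Cremona.

(* Main.v *)
Require Import Defs.
From HB Require Import structures.
From mathcomp Require Import all_boot all_order all_algebra.
From mathcomp Require Import mpoly.
From mathcomp Require Import ring.
Require Import Defs.
Import GRing.Theory.
Local Open Scope ring_scope.
Set Implicit Arguments. Unset Strict Implicit.
Notation o0 := (@Ordinal 3 0 isT).
Notation o1 := (@Ordinal 3 1 isT).
Notation o2 := (@Ordinal 3 2 isT).

Lemma ord3 (i : 'I_3) : i = o0 \/ i = o1 \/ i = o2.
Proof.
case: i => [[|[|[|//]]] Hi]; [left|right;left|right;right]; exact: val_inj.
Qed.

Lemma sum3 (R : nmodType) (F : 'I_3 -> R) : \sum_(i < 3) F i = F o0 + F o1 + F o2.
Proof.
rewrite !big_ord_recr big_ord0 /= add0r.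
by congr (F _ + F _ + F _); apply: val_inj.
Qed.

Definition tri {T : Type} (a b c : T) (j : 'I_3) : T :=
  match nat_of_ord j with 0 => a | 1 => b | _ => c end.

Lemma sum_delta (R : nzRingType) (V : lmodType R) (S : 'I_3 -> V) j :
  \sum_(l < 3) (j == l)%:R *: S l = S j.
Proof.
rewrite sum3; case: (ord3 j) => [->|[->|->]] /=; rewrite !scale0r !scale1r;
  by rewrite ?addr0 ?add0r.
Qed.

Lemma sum_delta' (R : nzRingType) (S : 'I_3 -> R) j :
  \sum_(l < 3) (j == l)%:R * S l = S j.
Proof.
rewrite sum3; case: (ord3 j) => [->|[->|->]] /=; rewrite !mul0r !mul1r;
  by rewrite ?addr0 ?add0r.
Qed.

Section Frame.
Variable k : closedFieldType.
Local Notation mp := {mpoly k[3]}.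
Variables (P lam : 'I_3 -> 'I_3 -> k).
Hypothesis dual1 : forall j l, \sum_(m < 3) lam j m * P l m = (j == l)%:R.
Hypothesis dual2 : forall i m, \sum_(j < 3) P j i * lam j m = (i == m)%:R.

Definition Lf (j : 'I_3) : mp := \sum_(m < 3) lam j m *: 'X_m.
Definition tr (S : 'I_3 -> mp) : pmap k := fun i => \sum_(j < 3) P j i *: S j.
Definition comb (y : 'I_3 -> k) : vec3 k := fun m => \sum_(j < 3) y j * P j m.

Lemma Lcomp j (Q : 'I_3 -> mp) :
  Lf j \mPo [tuple Q m | m < 3] = \sum_(m < 3) lam j m *: Q m.
Proof.
rewrite /Lf rmorph_sum; apply: eq_bigr => m _ /=.
by rewrite comp_mpolyZ comp_mpolyXU -tnth_nth tnth_mktuple.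
Qed.

Lemma back_tr j (S : 'I_3 -> mp) : \sum_(m < 3) lam j m *: tr S m = S j.
Proof.
rewrite /tr.
under eq_bigr do rewrite scaler_sumr.
rewrite exchange_big /=.
under eq_bigr do (under eq_bigr do rewrite scalerA; rewrite -scaler_suml dual1).
exact: sum_delta.
Qed.

Lemma comb_lam j y : \sum_(m < 3) lam j m * comb y m = y j.
Proof.
rewrite /comb.
under eq_bigr do rewrite mulr_sumr.
rewrite exchange_big /=.
under eq_bigr do (under eq_bigr do rewrite mulrCA; rewrite -mulr_sumr dual1 mulrC).
exact: sum_delta'.
Qed.

Lemma Leval j v : (Lf j).@[v] = \sum_(m < 3) lam j m * v m.
Proof.
rewrite /Lf rmorph_sum; apply: eq_bigr => m _ /=.
by rewrite mevalZ mevalXU.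
Qed.

Lemma Leval_comb j y : (Lf j).@[comb y] = y j.
Proof. by rewrite Leval comb_lam. Qed.

Lemma tr_eval S i v : (tr S i).@[v] = \sum_(j < 3) P j i * (S j).@[v].
Proof.
rewrite /tr rmorph_sum; apply: eq_bigr => j _ /=.
by rewrite mevalZ.
Qed.

Lemma back_tr_eval j S v : \sum_(i < 3) lam j i * (tr S i).@[v] = (S j).@[v].
Proof.
under eq_bigr do rewrite tr_eval mulr_sumr.
rewrite exchange_big /=.
under eq_bigr do (under eq_bigr do rewrite mulrA; rewrite -mulr_suml dual1).
exact: sum_delta'.
Qed.

Lemma tr_X (h : mp) i : tr (fun j => h * Lf j) i = h * 'X_i.
Proof.
rewrite /tr.
under eq_bigr do rewrite scalerAr.
rewrite -mulr_sumr; congr (_ * _).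
rewrite /Lf.
under eq_bigr do rewrite scaler_sumr.
rewrite exchange_big /=.
under eq_bigr do (under eq_bigr do rewrite scalerA; rewrite -scaler_suml dual2).
exact: sum_delta.
Qed.

Lemma X_homog (m : 'I_3) : ('X_m : mp) \is 1.-homog.
Proof. by rewrite dhomogX; apply/eqP; apply: mdeg1. Qed.

Lemma Lf_homog j : Lf j \is 1.-homog.
Proof.
rewrite /Lf; apply: rpred_sum => m _; apply: dhomogZ; exact: X_homog.
Qed.

Lemma tr_homog d S i : (forall j, S j \is d.-homog) -> tr S i \is d.-homog.
Proof.
move=> H; rewrite /tr; apply: rpred_sum => j _; apply: dhomogZ; exact: H.
Qed.

End Frame.

Section Crit.
Variable k : closedFieldType.
Local Notation mp := {mpoly k[3]}.

Lemma homog_msize d (p : mp) : p \is d.-homog -> (msize p <= d.+1)%N.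
Proof.
move/dhomogP => H; rewrite msizeE; apply/bigmax_leqP_seq => m Hm _.
by rewrite H.
Qed.

Lemma mnm1_eq (i j : 'I_3) : (U_(i) == U_(j) :> 'X_{1..3})%MM = (i == j).
Proof.
apply/eqP/eqP => [H|->//].
have := congr1 (fun m : 'X_{1..3} => m i) H.
rewrite !mnm1E eqxx; case: (j =P i) => // _ /= [] //.
Qed.

Lemma affine2 (r : mp) : (msize r <= 2)%N ->
  r = (r@_0)%:MP + \sum_(m < 3) r@_(U_(m)) *: 'X_m.
Proof.
move=> Hs; apply/mpolyP => mm.
rewrite mcoeffD mcoeffC raddf_sum /=.
under eq_bigr do rewrite mcoeffZ mcoeffX.
case E: (mdeg mm) => [|[|d]].
- move/eqP: E; rewrite mdeg_eq0 => /eqP ->.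
  rewrite eqxx mulr1 big1 ?addr0 // => m _.
  by rewrite mnm1_eq0 mulr0.
- move/eqP: E => /mdeg1P [i /eqP ->].
  have -> : (U_(i) == 0 :> 'X_{1..3})%MM = false by exact: mnm1_eq0.
  rewrite mulr0 add0r.
  under eq_bigr do rewrite mnm1_eq mulrC eq_sym.
  by rewrite sum_delta'.
- have Hn : mm \notin msupp r.
    by apply: msize_mdeg_ge; rewrite E; apply: leq_trans Hs _.
  move: Hn; rewrite mcoeff_msupp negbK => /eqP ->.
  have -> : (mm == 0)%MM = false.
    by apply/negP => /eqP Hm; move: E; rewrite Hm mdeg0.
  rewrite mulr0 add0r big1 // => m _.
  have -> : (U_(m) == mm)%MM = false.
    by apply/negP => /eqP Hm; move: E; rewrite -Hm mdeg1.
  by rewrite mulr0.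
Qed.

Lemma affine2_eval (r : mp) v : (msize r <= 2)%N ->
  r.@[v] = r@_0 + \sum_(m < 3) r@_(U_(m)) * v m.
Proof.
move=> /affine2 {1}->; rewrite mevalD mevalC rmorph_sum /=.
congr (_ + _); apply: eq_bigr => m _.
by rewrite mevalZ mevalXU.
Qed.

End Crit.

Section Crit2.
Variable k : closedFieldType.
Local Notation mp := {mpoly k[3]}.
Variables (P lam : 'I_3 -> 'I_3 -> k).
Hypothesis dual2 : forall i m, \sum_(j < 3) P j i * lam j m = (i == m)%:R.

Lemma comb_shift (c0 c1 c2 w : k) (j : 'I_3) m :
  comb P (tri (c0 + w * (j == o0)%:R) (c1 + w * (j == o1)%:R) (c2 + w * (j == o2)%:R)) m
  = comb P (tri c0 c1 c2) m + w * P j m.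
Proof.
rewrite /comb !sum3 /=.
by case: (ord3 j) => [->|[->|->]]; rewrite /tri /=; ring.
Qed.

Lemma crit (Q : pmap k) (E : 'I_3 -> k -> k -> k -> k) :
  (forall i, Q i \is 2.-homog) ->
  (forall j y0 y1 y2, \sum_(i < 3) lam j i * (Q i).@[comb P (tri y0 y1 y2)] = E j y0 y1 y2) ->
  (exists a0 a1 a2 b0 b1 b2, [/\ E o1 a0 a1 a2 = 0, E o0 a0 a1 a2 != 0 & E o1 b0 b1 b2 != 0]) ->
  (forall j, exists c0 c1 c2, forall w, exists i,
      E i (c0 + w * (j == o0)%:R) (c1 + w * (j == o1)%:R) (c2 + w * (j == o2)%:R) != 0) ->
  coprime3 Q.
Proof.
move=> Hh HE [a0 [a1 [a2 [b0 [b1 [b2 [Ea0 Ea1 Eb]]]]]]] Hb r Hdiv.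
have [s Hs] : exists s : 'I_3 -> mp, forall i, Q i = r * s i.
  case: (Hdiv o0) => s0 H0; case: (Hdiv o1) => s1 H1; case: (Hdiv o2) => s2 H2.
  by exists (tri s0 s1 s2) => i; case: (ord3 i) => [->|[->|->]].
have Key : forall j y0 y1 y2, E j y0 y1 y2 =
    r.@[comb P (tri y0 y1 y2)] * \sum_(i < 3) lam j i * (s i).@[comb P (tri y0 y1 y2)].
  move=> j y0 y1 y2; rewrite -HE mulr_sumr; apply: eq_bigr => i _.
  by rewrite Hs mevalM mulrCA.
have [i0 Hi0] : exists i, s i != 0.
  apply/existsP; apply: contraR Eb; rewrite negb_exists => /forallP Hz.
  rewrite Key big1 ?mulr0 // => i _.
  by move: (Hz i); rewrite negbK => /eqP ->; rewrite meval0 mulr0.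
have Hr : r != 0.
  apply: contraNneq Eb => Hr0.
  by rewrite Key Hr0 meval0 mul0r.
have Hms : (msize r <= 3)%N.
  have := homog_msize (Hh i0); rewrite Hs msizeM //.
  have : (0 < msize (s i0))%N by rewrite lt0n msize_poly_eq0.
  by case: (msize (s i0)) => // n _; rewrite addnS /=; apply: leq_trans; rewrite leq_addr.
rewrite leqNgt; apply/negP => Hgt.
have : (msize r == 2) || (msize r == 3).
  by move: Hgt Hms; case: (msize r) => [|[|[|[|]]]].
case/orP => /eqP Hsz.
-
  pose bb m := r@_(U_(m)).
  have Hev := fun v => affine2_eval v (eq_leq Hsz).
  have [m0 Hm0] : exists m, bb m != 0.
    apply/existsP; apply: contraT; rewrite negb_exists => /forallP Hz.
    have := Hsz; rewrite {1}(affine2 (eq_leq Hsz)) big1 ?addr0.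
      by rewrite msizeC; case: (_ != 0).
    by move=> m _; move: (Hz m); rewrite /bb negbK => /eqP ->; rewrite scale0r.
  have [j Hj] : exists j, \sum_(m < 3) bb m * P j m != 0.
    apply/existsP; apply: contraT; rewrite negb_exists => /forallP Hz.
    move: Hm0; apply: contraR => _; apply/eqP.
    have -> : bb m0 = \sum_(j < 3) (\sum_(m < 3) bb m * P j m) * lam j m0.
      under eq_bigr do rewrite mulr_suml.
      rewrite exchange_big /=.
      under eq_bigr do (under eq_bigr do rewrite -mulrA; rewrite -mulr_sumr dual2).
      by under eq_bigr do rewrite mulrC eq_sym; rewrite sum_delta'.
    by rewrite big1 // => i _; move: (Hz i); rewrite negbK => /eqP ->; rewrite mul0r.
  case: (Hb j) => c0 [c1 [c2 Hc]].
  set beta := \sum_(m < 3) bb m * P j m in Hj.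
  pose w := - (r.@[comb P (tri c0 c1 c2)]) / beta.
  case: (Hc w) => i; rewrite Key.
  have -> : r.@[comb P (tri (c0 + w * (j == o0)%:R) (c1 + w * (j == o1)%:R) (c2 + w * (j == o2)%:R))] = 0.
    rewrite Hev.
    under eq_bigr do rewrite comb_shift mulrDr.
    rewrite big_split /= addrA -Hev.
    have -> : \sum_(m < 3) r@_U_(m) * (w * P j m) = w * beta.
      rewrite mulr_sumr; apply: eq_bigr => m _; rewrite /bb; ring.
    by rewrite /w; field.
  by rewrite mul0r eqxx.
-
  have Hc : forall i, s i = ((s i)@_0)%:MP.
    move=> i; case: (eqVneq (s i) 0) => [->|Hsi]; first by rewrite mcoeff0.
    apply: msize1_polyC.
    have := homog_msize (Hh i); rewrite Hs msizeM // Hsz.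
    by case: (msize (s i)) => [|[|n]].
  have Key2 : forall j y0 y1 y2, E j y0 y1 y2 =
      r.@[comb P (tri y0 y1 y2)] * \sum_(i < 3) lam j i * (s i)@_0.
    move=> j y0 y1 y2; rewrite Key; congr (_ * _); apply: eq_bigr => i _.
    by rewrite {1}Hc mevalC.
  move: Ea0 Ea1 Eb; rewrite !Key2 => /eqP; rewrite mulf_eq0 => /orP [/eqP ->|/eqP ->].
    by rewrite mul0r eqxx.
  by move=> _; rewrite mulr0 eqxx.
Qed.

End Crit2.

Definition mfam (f : forall R : comRingType, 'I_3 -> R -> R -> R -> R) : Prop :=
  forall (R S : comRingType) (phi : {rmorphism R -> S}) j x y z,
    phi (f R j x y z) = f S j (phi x) (phi y) (phi z).
Definition mfun (h : forall R : comRingType, R -> R -> R -> R -> R) : Prop :=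
  forall (R S : comRingType) (phi : {rmorphism R -> S}) x y z t,
    phi (h R x y z t) = h S (phi x) (phi y) (phi z) (phi t).
Definition hfam (f : forall R : comRingType, 'I_3 -> R -> R -> R -> R) : Prop :=
  forall (k : closedFieldType) j (x y z : {mpoly k[3]}),
    x \is 1.-homog -> y \is 1.-homog -> z \is 1.-homog -> f _ j x y z \is 2.-homog.

Definition full (f0 f1 f2 : forall R : comRingType, 'I_3 -> R -> R -> R -> R)
  (R : comRingType) (j : 'I_3) (x y z t : R) : R :=
  f0 R j x y z + t * f1 R j x y z + t * t * f2 R j x y z.

Lemma fullM f0 f1 f2 : mfam f0 -> mfam f1 -> mfam f2 ->
  forall (R S : comRingType) (phi : {rmorphism R -> S}) j x y z t,
    phi (full f0 f1 f2 j x y z t) = full f0 f1 f2 j (phi x) (phi y) (phi z) (phi t).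
Proof.
move=> H0 H1 H2 R S phi j x y z t.
by rewrite /full !rmorphD !rmorphM H0 H1 H2.
Qed.

Definition mkfam (k : closedFieldType) (a b c : 'I_3 -> {mpoly k[3]}) : fpmap k :=
  fun i => (a i)%:P + (b i)%:P * 'X + (c i)%:P * 'X^2.

Lemma fiber_mkfam (k : closedFieldType) (a b c : 'I_3 -> {mpoly k[3]}) t i :
  fiber (mkfam a b c) t i = a i + t%:MP * b i + t%:MP * t%:MP * c i.
Proof. rewrite /fiber /mkfam !hornerE /=; ring. Qed.

Lemma coef_mkfam (k : closedFieldType) (a b c : 'I_3 -> {mpoly k[3]}) d i n :
  a i \is d.-homog -> b i \is d.-homog -> c i \is d.-homog ->
  (mkfam a b c i)`_n \is d.-homog.
Proof.
move=> Ha Hb Hc; rewrite /mkfam !coefD coefC !coefCM coefX coefXn.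
case: n => [|[|[|n]]] /=; rewrite ?mulr0 ?mulr1 ?addr0 ?add0r //; exact: dhomog0.
Qed.

Lemma meval_full f0 f1 f2 : mfam f0 -> mfam f1 -> mfam f2 ->
  forall (k : closedFieldType) (v : 'I_3 -> k) j (x y z t : {mpoly k[3]}),
    (full f0 f1 f2 j x y z t).@[v] = full f0 f1 f2 j x.@[v] y.@[v] z.@[v] t.@[v].
Proof. move=> H0 H1 H2 k v j x y z t; exact: (fullM H0 H1 H2 (meval v)). Qed.

Lemma comp_full f0 f1 f2 : mfam f0 -> mfam f1 -> mfam f2 ->
  forall (k : closedFieldType) (lq : 3.-tuple {mpoly k[3]}) j (x y z t : {mpoly k[3]}),
    (full f0 f1 f2 j x y z t) \mPo lq =
    full f0 f1 f2 j (x \mPo lq) (y \mPo lq) (z \mPo lq) (t \mPo lq).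
Proof. move=> H0 H1 H2 k lq j x y z t; exact: (fullM H0 H1 H2 (comp_mpoly lq)). Qed.

Section Family.
Variable k : closedFieldType.
Local Notation mp := {mpoly k[3]}.
Variables (P lam : 'I_3 -> 'I_3 -> k).
Hypothesis dual1 : forall j l, \sum_(m < 3) lam j m * P l m = (j == l)%:R.
Hypothesis dual2 : forall i m, \sum_(j < 3) P j i * lam j m = (i == m)%:R.
Variables (f0 f1 f2 g0 g1 g2 : forall R : comRingType, 'I_3 -> R -> R -> R -> R)
          (hF hG : forall R : comRingType, R -> R -> R -> R -> R).
Hypotheses (Mf0 : mfam f0) (Mf1 : mfam f1) (Mf2 : mfam f2)
           (Mg0 : mfam g0) (Mg1 : mfam g1) (Mg2 : mfam g2)
           (MhF : mfun hF) (MhG : mfun hG).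
Hypotheses (Hf0 : hfam f0) (Hf1 : hfam f1) (Hf2 : hfam f2)
           (Hg0 : hfam g0) (Hg1 : hfam g1) (Hg2 : hfam g2).
Local Notation Fs := (full f0 f1 f2).
Local Notation Gs := (full g0 g1 g2).
Hypothesis Hcomp1 : forall (R : comRingType) (x y z t : R) j,
  Gs j (Fs o0 x y z t) (Fs o1 x y z t) (Fs o2 x y z t) t = hF x y z t * tri x y z j.
Hypothesis Hcomp2 : forall (R : comRingType) (x y z t : R) j,
  Fs j (Gs o0 x y z t) (Gs o1 x y z t) (Gs o2 x y z t) t = hG x y z t * tri x y z j.
Hypothesis HhF : forall t : k, hF 0 0 1 t = 1.
Hypothesis HhG : forall t : k, hG 0 0 1 t = 1.
Hypothesis HFe2 : forall (t : k) j, Fs j 0 0 1 t = tri 0 0 1 j.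
Hypothesis HGe2 : forall (t : k) j, Gs j 0 0 1 t = tri 0 0 1 j.
Hypothesis Hid : forall (R : comRingType) (x y z : R) j, f0 j x y z = z * tri x y z j.

Local Notation L := (Lf lam).
Definition LL (f : forall R : comRingType, 'I_3 -> R -> R -> R -> R) j : mp :=
  f _ j (L o0) (L o1) (L o2).
Definition FF : fpmap k := mkfam (tr P (LL f0)) (tr P (LL f1)) (tr P (LL f2)).
Definition GG : fpmap k := mkfam (tr P (LL g0)) (tr P (LL g1)) (tr P (LL g2)).

Lemma fiber_tr (a b c : forall R : comRingType, 'I_3 -> R -> R -> R -> R) t i :
  fiber (mkfam (tr P (LL a)) (tr P (LL b)) (tr P (LL c))) t i =
  tr P (fun j => full a b c j (L o0) (L o1) (L o2) t%:MP) i.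
Proof.
rewrite fiber_mkfam /tr /full !mulr_sumr -!big_split /=; apply: eq_bigr => j _.
by rewrite !scalerDr !scalerAr.
Qed.

Lemma tri_L j : tri (L o0) (L o1) (L o2) j = L j.
Proof. by case: (ord3 j) => [->|[->|->]]. Qed.

Lemma eval_full (a b c : forall R : comRingType, 'I_3 -> R -> R -> R -> R) :
  mfam a -> mfam b -> mfam c -> forall t i y0 y1 y2,
  (fiber (mkfam (tr P (LL a)) (tr P (LL b)) (tr P (LL c))) t i).@[comb P (tri y0 y1 y2)] =
  \sum_(j < 3) P j i * full a b c j y0 y1 y2 t.
Proof.
move=> Ma Mb Mc t i y0 y1 y2.
rewrite fiber_tr tr_eval; apply: eq_bigr => j _.
by rewrite (meval_full Ma Mb Mc) !Leval_comb // mevalC.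
Qed.

Lemma back_full (a b c : forall R : comRingType, 'I_3 -> R -> R -> R -> R) :
  mfam a -> mfam b -> mfam c -> forall t j y0 y1 y2,
  \sum_(i < 3) lam j i *
    (fiber (mkfam (tr P (LL a)) (tr P (LL b)) (tr P (LL c))) t i).@[comb P (tri y0 y1 y2)] =
  full a b c j y0 y1 y2 t.
Proof.
move=> Ma Mb Mc t j y0 y1 y2.
under eq_bigr do rewrite fiber_tr.
rewrite back_tr_eval //.
by rewrite (meval_full Ma Mb Mc) !Leval_comb // mevalC.
Qed.

Lemma sum_tri001 (F : 'I_3 -> k) : \sum_(j < 3) F j * tri 0 0 1 j = F o2.
Proof. by rewrite sum3 /tri /= !mulr0 !add0r mulr1. Qed.

Lemma P2_nz : exists i, P o2 i != 0.
Proof.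
apply/existsP; apply: contraT; rewrite negb_exists => /forallP Hz.
have := dual1 o2 o2; rewrite eqxx big1 ?(@oner_eq0 k) //.
  by move=> /esym /eqP; rewrite oner_eq0.
by move=> m _; move: (Hz m); rewrite negbK => /eqP ->; rewrite mulr0.
Qed.

Lemma comp_fiber (a b c a' b' c' : forall R : comRingType, 'I_3 -> R -> R -> R -> R) t i :
  mfam a' -> mfam b' -> mfam c' ->
  compm (fiber (mkfam (tr P (LL a')) (tr P (LL b')) (tr P (LL c'))) t)
        (fiber (mkfam (tr P (LL a)) (tr P (LL b)) (tr P (LL c))) t) i =
  tr P (fun j => full a' b' c' j (full a b c o0 (L o0) (L o1) (L o2) t%:MP)
                                  (full a b c o1 (L o0) (L o1) (L o2) t%:MP)
                                  (full a b c o2 (L o0) (L o1) (L o2) t%:MP) t%:MP) i.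
Proof.
move=> Ma Mb Mc.
rewrite /compm; set lq := [tuple _ | _ < 3].
rewrite fiber_tr {1}/tr.
rewrite rmorph_sum; apply: eq_bigr => j _ /=.
rewrite comp_mpolyZ; congr (_ *: _).
rewrite (comp_full Ma Mb Mc) comp_mpolyC.
by rewrite !Lcomp; under eq_bigr do rewrite fiber_tr; rewrite back_tr //;
  under eq_bigr do rewrite fiber_tr; rewrite back_tr //;
  under eq_bigr do rewrite fiber_tr; rewrite back_tr.
Qed.


Lemma meval_h (h : forall R : comRingType, R -> R -> R -> R -> R) :
  mfun h -> forall (v : 'I_3 -> k) (x y z t : mp),
  (h _ x y z t).@[v] = h _ x.@[v] y.@[v] z.@[v] t.@[v].
Proof. move=> Mh v x y z t; exact: (Mh _ _ (meval v)). Qed.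

Lemma nz_of_eval (p : mp) v : p.@[v] != 0 -> p != 0.
Proof. by apply: contraNneq => ->; rewrite meval0. Qed.

Lemma fiber_nz (a b c : forall R : comRingType, 'I_3 -> R -> R -> R -> R) t :
  mfam a -> mfam b -> mfam c -> (forall j, full a b c j 0 0 1 t = tri 0 0 1 j) ->
  exists i, fiber (mkfam (tr P (LL a)) (tr P (LL b)) (tr P (LL c))) t i != 0.
Proof.
move=> Ma Mb Mc He; case: P2_nz => i Hi; exists i.
apply: (@nz_of_eval _ (comb P (tri 0 0 1))).
rewrite (eval_full Ma Mb Mc).
by under eq_bigr do rewrite He; rewrite sum_tri001.
Qed.

Lemma ident_comp (a b c a' b' c' : forall R : comRingType, 'I_3 -> R -> R -> R -> R)
  (h : forall R : comRingType, R -> R -> R -> R -> R) t :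
  mfam a' -> mfam b' -> mfam c' -> mfun h -> h _ 0 0 1 t = 1 ->
  (forall (R : comRingType) (x y z t : R) j,
    full a' b' c' j (full a b c o0 x y z t) (full a b c o1 x y z t)
      (full a b c o2 x y z t) t = h _ x y z t * tri x y z j) ->
  is_identity_map (compm (fiber (mkfam (tr P (LL a')) (tr P (LL b')) (tr P (LL c'))) t)
        (fiber (mkfam (tr P (LL a)) (tr P (LL b)) (tr P (LL c))) t)).
Proof.
move=> Ma Mb Mc Mh Hh1 Hc.
exists (h _ (L o0) (L o1) (L o2) t%:MP); split.
  apply: (@nz_of_eval _ (comb P (tri 0 0 1))).
  by rewrite (meval_h Mh) !Leval_comb // mevalC Hh1 oner_eq0.
move=> i; rewrite comp_fiber //.
rewrite -(tr_X dual2); rewrite /tr; apply: eq_bigr => j _.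
by rewrite Hc tri_L.
Qed.

Lemma LL_homog (f : forall R : comRingType, 'I_3 -> R -> R -> R -> R) j :
  hfam f -> LL f j \is 2.-homog.
Proof. move=> Hf; apply: Hf; exact: Lf_homog. Qed.

Lemma bir_FF : bir_family FF GG.
Proof.
exists 2%N, 2%N; split.
- move=> i n; apply: coef_mkfam; apply: tr_homog => j; exact: LL_homog.
- move=> i n; apply: coef_mkfam; apply: tr_homog => j; exact: LL_homog.
- move=> t; split; [|split; [|split]].
  + exact: fiber_nz.
  + exact: fiber_nz.
  + exact: (ident_comp Mg0 Mg1 Mg2 MhF).
  + exact: (ident_comp Mf0 Mf1 Mf2 MhG).
Qed.

Lemma ident0 : is_identity_map (fiber FF 0).
Proof.
exists (L o2); split.
  apply: (@nz_of_eval _ (comb P (tri 0 0 1))).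
  by rewrite Leval_comb // oner_eq0.
move=> i; rewrite fiber_tr -(tr_X dual2); rewrite /tr; apply: eq_bigr => j _.
by rewrite /full Hid tri_L rmorph0 !mul0r !addr0.
Qed.


Definition P3 : vfamily k := fun m => (P o0 m + P o1 m)%:P + (P o2 m)%:P * 'X.

Lemma vfiber_P3 t m : vfiber P3 t m = comb P (tri 1 1 t) m.
Proof. rewrite /vfiber /P3 !hornerE /comb sum3 /tri /=; ring. Qed.

Lemma comb_e0 m : comb P (tri 1 0 0) m = P o0 m.
Proof. rewrite /comb sum3 /tri /=; ring. Qed.

Lemma comb_e1 m : comb P (tri 0 1 0) m = P o1 m.
Proof. rewrite /comb sum3 /tri /=; ring. Qed.

Lemma lam_P3 j t : \sum_(m < 3) lam j m * vfiber P3 t m = tri 1 1 t j.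
Proof. by under eq_bigr do rewrite vfiber_P3; rewrite comb_lam. Qed.

Lemma morph_P3 : morph_A1_P2 P3.
Proof.
move=> t; apply/existsP; apply: contraT; rewrite negb_exists => /forallP Hz.
have := lam_P3 o0 t; rewrite /tri /= big1; first by move/eqP; rewrite eq_sym oner_eq0.
by move=> m _; move: (Hz m); rewrite negbK => /eqP; rewrite /vfiber => ->; rewrite mulr0.
Qed.

Lemma lam_scaled j (u v : 'I_3 -> k) c : (forall m, u m = c * v m) ->
  \sum_(m < 3) lam j m * u m = c * \sum_(m < 3) lam j m * v m.
Proof.
move=> H; rewrite mulr_sumr; apply: eq_bigr => m _; rewrite H; ring.
Qed.

Lemma P3_not_P j0 t : tri 1 1 t j0 != 0 -> forall l, j0 != l -> ~ proj_eq (vfiber P3 t) (P l).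
Proof.
move=> Hj l Hl [c [_ H]]; move: Hj.
rewrite -(lam_P3 j0 t) (lam_scaled _ H) dual1.
by rewrite (negbTE Hl) mulr0 eqxx.
Qed.

Section Quad.
Hypothesis HFe0 : forall (t : k) j, Fs j 1 0 0 t = 0.
Hypothesis HFp3 : forall (t : k) j, Fs j 1 1 t t = 0.
Hypothesis Ha : forall t : k, t != 0 -> exists a0 a1 a2 b0 b1 b2,
  [/\ Fs o1 a0 a1 a2 t = 0, Fs o0 a0 a1 a2 t != 0 & Fs o1 b0 b1 b2 t != 0].
Hypothesis Hb : forall t : k, t != 0 -> forall j, exists c0 c1 c2, forall w, exists i,
  Fs i (c0 + w * (j == o0)%:R) (c1 + w * (j == o1)%:R) (c2 + w * (j == o2)%:R) t != 0.

Lemma quad_generic t : t != 0 ->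
  [/\ homog_map 2 (fiber FF t), coprime3 (fiber FF t),
      forall i, (fiber FF t i).@[P o0] = 0 &
      forall i, (fiber FF t i).@[vfiber P3 t] = 0].
Proof.
move=> Ht; split.
- move=> i; rewrite fiber_tr; apply: tr_homog => j.
  rewrite /full; apply: rpredD; [apply: rpredD|].
  + exact: LL_homog.
  + rewrite mul_mpolyC; apply: dhomogZ; exact: LL_homog.
  + rewrite -mulrA !mul_mpolyC; apply: dhomogZ; apply: dhomogZ; exact: LL_homog.
- apply: (crit dual2 (E := fun j y0 y1 y2 => Fs j y0 y1 y2 t)).
  + move=> i; rewrite fiber_tr; apply: tr_homog => j.
    rewrite /full; apply: rpredD; [apply: rpredD|].
    * exact: LL_homog.
    * rewrite mul_mpolyC; apply: dhomogZ; exact: LL_homog.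
    * rewrite -mulrA !mul_mpolyC; apply: dhomogZ; apply: dhomogZ; exact: LL_homog.
  + by move=> j y0 y1 y2; rewrite back_full.
  + exact: Ha.
  + exact: Hb.
- move=> i; rewrite -(meval_eq _ comb_e0) eval_full //.
  by rewrite big1 // => j _; rewrite HFe0 mulr0.
- move=> i; rewrite (meval_eq _ (vfiber_P3 t)) eval_full //.
  by rewrite big1 // => j _; rewrite HFp3 mulr0.
Qed.

End Quad.

End Family.

Lemma hom11 (k : closedFieldType) (x y : {mpoly k[3]}) :
  x \is 1.-homog -> y \is 1.-homog -> x * y \is 2.-homog.
Proof. move=> hx hy; exact: (dhomogM hx hy). Qed.

Ltac mfam_tac :=
  let R := fresh "R" in let S := fresh "S" in let phi := fresh "phi" in
  let j := fresh "j" in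
  move=> R S phi j x y z; case: (ord3 j) => [->|[->|->]]; rewrite /tri /=;
  rewrite ?(rmorphM, rmorphN, rmorphB, rmorphD, rmorph0, rmorph1) //.

Ltac hfam_tac :=
  let kk := fresh "kk" in let j := fresh "j" in
  move=> kk j x y z hx hy hz; case: (ord3 j) => [->|[->|->]]; rewrite /tri /=;
  repeat first [ rewrite rpredN | apply: rpredB | apply: rpredD | apply: hom11 | exact: rpred0 | assumption ].

(* Family A : base points e0, e1, (1:1:t) *)
Definition fA0 (R : comRingType) (j : 'I_3) (x y z : R) : R := tri (x * z) (y * z) (z * z) j.
Definition fA1 (R : comRingType) (j : 'I_3) (x y z : R) : R := tri (- (x * y)) (- (x * y)) (- (x * z)) j.
Definition fA2 (R : comRingType) (j : 'I_3) (x y z : R) : R := tri 0 0 0 j.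
Definition gA1 (R : comRingType) (j : 'I_3) (x y z : R) : R := tri 0 (y * x - y * y) (z * x - z * y) j.
Definition hFA (R : comRingType) (x y z t : R) : R := z * (z - t * x) * (z - t * y).
Definition hGA (R : comRingType) (x y z t : R) : R := z * (z + t * x - t * y) * (z - t * y).

Lemma MfA0 : mfam fA0. Proof. rewrite /fA0; mfam_tac. Qed.
Lemma MfA1 : mfam fA1. Proof. rewrite /fA1; mfam_tac. Qed.
Lemma MfA2 : mfam fA2. Proof. rewrite /fA2; mfam_tac. Qed.
Lemma MgA1 : mfam gA1. Proof. rewrite /gA1; mfam_tac. Qed.
Lemma MhFA : mfun hFA.
Proof. move=> R S phi x y z t; by rewrite /hFA !rmorphM !rmorphB !rmorphM. Qed.
Lemma MhGA : mfun hGA.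
Proof. move=> R S phi x y z t; by rewrite /hGA !rmorphM !rmorphB !rmorphD !rmorphM. Qed.
Lemma HfA0 : hfam fA0. Proof. rewrite /fA0; hfam_tac. Qed.
Lemma HfA1 : hfam fA1. Proof. rewrite /fA1; hfam_tac. Qed.
Lemma HfA2 : hfam fA2. Proof. rewrite /fA2; hfam_tac. Qed.
Lemma HgA1 : hfam gA1. Proof. rewrite /gA1; hfam_tac. Qed.

Lemma compA1 (R : comRingType) (x y z t : R) j :
  full fA0 gA1 fA2 j (full fA0 fA1 fA2 o0 x y z t) (full fA0 fA1 fA2 o1 x y z t)
    (full fA0 fA1 fA2 o2 x y z t) t = hFA x y z t * tri x y z j.
Proof. rewrite /full /fA0 /fA1 /fA2 /gA1 /hFA; case: (ord3 j) => [->|[->|->]]; rewrite /tri /=; ring. Qed.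
Lemma compA2 (R : comRingType) (x y z t : R) j :
  full fA0 fA1 fA2 j (full fA0 gA1 fA2 o0 x y z t) (full fA0 gA1 fA2 o1 x y z t)
    (full fA0 gA1 fA2 o2 x y z t) t = hGA x y z t * tri x y z j.
Proof. rewrite /full /fA0 /fA1 /fA2 /gA1 /hGA; case: (ord3 j) => [->|[->|->]]; rewrite /tri /=; ring. Qed.

(* Family B : base point e0, tangent direction z = 0, and (1:1:t) *)
Definition fB1 (R : comRingType) (j : 'I_3) (x y z : R) : R := tri (- (y * y)) (- (y * y)) 0 j.
Definition fB2 (R : comRingType) (j : 'I_3) (x y z : R) : R := tri 0 0 (- (y * y)) j.
Definition gB1 (R : comRingType) (j : 'I_3) (x y z : R) : R :=
  tri (y * y - x * y - x * y) (- (y * y)) (- (z * y) - z * y) j.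
Definition gB2 (R : comRingType) (j : 'I_3) (x y z : R) : R := tri 0 0 (y * y) j.
Definition hFB (R : comRingType) (x y z t : R) : R := z * (z - t * y) * (z - t * y).
Definition hGB (R : comRingType) (x y z t : R) : R := (z - t * y) * (z - t * y) * (z - t * y - t * y).

Lemma MfB1 : mfam fB1. Proof. rewrite /fB1; mfam_tac. Qed.
Lemma MfB2 : mfam fB2. Proof. rewrite /fB2; mfam_tac. Qed.
Lemma MgB1 : mfam gB1. Proof. rewrite /gB1; mfam_tac. Qed.
Lemma MgB2 : mfam gB2. Proof. rewrite /gB2; mfam_tac. Qed.
Lemma MhFB : mfun hFB.
Proof. move=> R S phi x y z t; by rewrite /hFB !rmorphM !rmorphB !rmorphM. Qed.
Lemma MhGB : mfun hGB.
Proof. move=> R S phi x y z t; by rewrite /hGB !rmorphM !rmorphB !rmorphM. Qed.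
Lemma HfB1 : hfam fB1. Proof. rewrite /fB1; hfam_tac. Qed.
Lemma HfB2 : hfam fB2. Proof. rewrite /fB2; hfam_tac. Qed.
Lemma HgB1 : hfam gB1. Proof. rewrite /gB1; hfam_tac. Qed.
Lemma HgB2 : hfam gB2. Proof. rewrite /gB2; hfam_tac. Qed.

Lemma compB1 (R : comRingType) (x y z t : R) j :
  full fA0 gB1 gB2 j (full fA0 fB1 fB2 o0 x y z t) (full fA0 fB1 fB2 o1 x y z t)
    (full fA0 fB1 fB2 o2 x y z t) t = hFB x y z t * tri x y z j.
Proof. rewrite /full /fA0 /fB1 /fB2 /gB1 /gB2 /hFB; case: (ord3 j) => [->|[->|->]]; rewrite /tri /=; ring. Qed.
Lemma compB2 (R : comRingType) (x y z t : R) j :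
  full fA0 fB1 fB2 j (full fA0 gB1 gB2 o0 x y z t) (full fA0 gB1 gB2 o1 x y z t)
    (full fA0 gB1 gB2 o2 x y z t) t = hGB x y z t * tri x y z j.
Proof. rewrite /full /fA0 /fB1 /fB2 /gB1 /gB2 /hGB; case: (ord3 j) => [->|[->|->]]; rewrite /tri /=; ring. Qed.

Section Kfacts.
Variable k : closedFieldType.

Lemma neq_eq (x y : k) : x = y -> y != 0 -> x != 0.
Proof. by move=> ->. Qed.

Ltac trisimp := rewrite /full /fA0 /fA1 /fA2 /fB1 /fB2 /gA1 /gB1 /gB2 /tri /=.

Lemma hFA1 (t : k) : hFA 0 0 1 t = 1. Proof. rewrite /hFA; ring. Qed.
Lemma hGA1 (t : k) : hGA 0 0 1 t = 1. Proof. rewrite /hGA; ring. Qed.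
Lemma hFB1 (t : k) : hFB 0 0 1 t = 1. Proof. rewrite /hFB; ring. Qed.
Lemma hGB1 (t : k) : hGB 0 0 1 t = 1. Proof. rewrite /hGB; ring. Qed.

Lemma e2A (t : k) j : full fA0 fA1 fA2 j 0 0 1 t = tri 0 0 1 j.
Proof. by case: (ord3 j) => [->|[->|->]]; trisimp; ring. Qed.
Lemma e2gA (t : k) j : full fA0 gA1 fA2 j 0 0 1 t = tri 0 0 1 j.
Proof. by case: (ord3 j) => [->|[->|->]]; trisimp; ring. Qed.
Lemma e2B (t : k) j : full fA0 fB1 fB2 j 0 0 1 t = tri 0 0 1 j.
Proof. by case: (ord3 j) => [->|[->|->]]; trisimp; ring. Qed.
Lemma e2gB (t : k) j : full fA0 gB1 gB2 j 0 0 1 t = tri 0 0 1 j.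
Proof. by case: (ord3 j) => [->|[->|->]]; trisimp; ring. Qed.
Lemma e0A (t : k) j : full fA0 fA1 fA2 j 1 0 0 t = 0.
Proof. by case: (ord3 j) => [->|[->|->]]; trisimp; ring. Qed.
Lemma e0B (t : k) j : full fA0 fB1 fB2 j 1 0 0 t = 0.
Proof. by case: (ord3 j) => [->|[->|->]]; trisimp; ring. Qed.
Lemma e1A (t : k) j : full fA0 fA1 fA2 j 0 1 0 t = 0.
Proof. by case: (ord3 j) => [->|[->|->]]; trisimp; ring. Qed.
Lemma p3A (t : k) j : full fA0 fA1 fA2 j 1 1 t t = 0.
Proof. by case: (ord3 j) => [->|[->|->]]; trisimp; ring. Qed.
Lemma p3B (t : k) j : full fA0 fB1 fB2 j 1 1 t t = 0.
Proof. by case: (ord3 j) => [->|[->|->]]; trisimp; ring. Qed.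

Lemma idA (R : comRingType) (x y z : R) j : fA0 j x y z = z * tri x y z j.
Proof. by case: (ord3 j) => [->|[->|->]]; rewrite /fA0 /tri /=; ring. Qed.

Lemma HaA (t : k) : t != 0 -> exists a0 a1 a2 b0 b1 b2,
  [/\ full fA0 fA1 fA2 o1 a0 a1 a2 t = 0, full fA0 fA1 fA2 o0 a0 a1 a2 t != 0
    & full fA0 fA1 fA2 o1 b0 b1 b2 t != 0].
Proof.
move=> Ht; exists 1, 0, 1, 0, 1, 1; split; trisimp.
- ring.
- by apply: (@neq_eq _ 1); [ring|exact: oner_neq0].
- by apply: (@neq_eq _ 1); [ring|exact: oner_neq0].
Qed.

Lemma HaB (t : k) : t != 0 -> exists a0 a1 a2 b0 b1 b2,
  [/\ full fA0 fB1 fB2 o1 a0 a1 a2 t = 0, full fA0 fB1 fB2 o0 a0 a1 a2 t != 0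
    & full fA0 fB1 fB2 o1 b0 b1 b2 t != 0].
Proof.
move=> Ht; exists 1, 0, 1, 0, 1, (t + 1); split; trisimp.
- ring.
- by apply: (@neq_eq _ 1); [ring|exact: oner_neq0].
- by apply: (@neq_eq _ 1); [ring|exact: oner_neq0].
Qed.

Lemma HbA (char0 : [pchar k] =i pred0) (t : k) : t != 0 -> forall j, exists c0 c1 c2, forall w, exists i,
  full fA0 fA1 fA2 i (c0 + w * (j == o0)%:R) (c1 + w * (j == o1)%:R) (c2 + w * (j == o2)%:R) t != 0.
Proof.
move=> Ht j; case: (ord3 j) => [->|[->|->]].
- exists 0, 0, 1 => w; case: (eqVneq w 0) => [->|Hw].
  + exists o2; trisimp; by apply: (@neq_eq _ 1); [ring|exact: oner_neq0].
  + exists o0; trisimp; by apply: (@neq_eq _ w); [ring|].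
- exists 0, 0, 1 => w; exists o2; trisimp; by apply: (@neq_eq _ 1); [ring|exact: oner_neq0].
- have H2 : (1 + 1 : k) != 0.
    move/pcharf0P: char0 => H; have := H 2%N; rewrite -mulr2n => ->; by [].
  exists 1, (1 + 1), 0 => w; case: (eqVneq (w - (1 + 1) * t) 0) => [Hw|Hw].
  + exists o1; trisimp.
    have -> : w = (1 + 1) * t by apply/eqP; rewrite -subr_eq0 Hw.
    by apply: (@neq_eq _ ((1 + 1) * t)); [ring|rewrite mulf_neq0].
  + exists o0; trisimp; by apply: (@neq_eq _ (w - (1 + 1) * t)); [ring|].
Qed.

Lemma HbB (t : k) : t != 0 -> forall j, exists c0 c1 c2, forall w, exists i,
  full fA0 fB1 fB2 i (c0 + w * (j == o0)%:R) (c1 + w * (j == o1)%:R) (c2 + w * (j == o2)%:R) t != 0.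
Proof.
move=> Ht j; case: (ord3 j) => [->|[->|->]].
- exists 0, 1, 0 => w; exists o0; trisimp.
  by apply: (@neq_eq _ (- t)); [ring|rewrite oppr_eq0].
- exists 0, 0, 1 => w; case: (eqVneq w 0) => [->|Hw].
  + exists o2; trisimp; by apply: (@neq_eq _ 1); [ring|exact: oner_neq0].
  + exists o0; trisimp; apply: (@neq_eq _ (- (t * (w * w)))); first ring.
    by rewrite oppr_eq0 !mulf_neq0.
- exists 0, 1, 0 => w; exists o0; trisimp.
  by apply: (@neq_eq _ (- t)); [ring|rewrite oppr_eq0].
Qed.

End Kfacts.

Section Frames.
Variable k : closedFieldType.

Definition cross (u v : vec3 k) : vec3 k := fun i =>
  tri (u o1 * v o2 - u o2 * v o1) (u o2 * v o0 - u o0 * v o2) (u o0 * v o1 - u o1 * v o0) i.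
Definition ew (m : 'I_3) : vec3 k := fun i => (i == m)%:R.
Definition detv (u v w : vec3 k) : k := \sum_(m < 3) w m * cross u v m.
Definition Pf (u v w : vec3 k) : 'I_3 -> 'I_3 -> k := fun j => tri u v w j.
Definition lamf (u v w : vec3 k) : 'I_3 -> 'I_3 -> k :=
  fun j m => tri (cross v w m / detv u v w) (cross w u m / detv u v w)
                 (cross u v m / detv u v w) j.

Lemma frame_dual1 u v w : detv u v w != 0 ->
  forall j l, \sum_(m < 3) lamf u v w j m * Pf u v w l m = (j == l)%:R.
Proof.
move=> HD j l; move: HD; rewrite /lamf /Pf /detv /cross sum3 /tri /= => HD.
by case: (ord3 j) => [->|[->|->]]; case: (ord3 l) => [->|[->|->]];
  rewrite /= sum3 /=; field.
Qed.

Lemma frame_dual2 u v w : detv u v w != 0 ->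
  forall i m, \sum_(j < 3) Pf u v w j i * lamf u v w j m = (i == m)%:R.
Proof.
move=> HD i m; move: HD; rewrite /lamf /Pf /detv /cross sum3 /tri /= => HD.
by case: (ord3 i) => [->|[->|->]]; case: (ord3 m) => [->|[->|->]];
  rewrite /= sum3 /=; field.
Qed.

Lemma det_ew u v m : detv u v (ew m) = cross u v m.
Proof.
rewrite /detv /ew sum3.
by case: (ord3 m) => [->|[->|->]] /=; rewrite ?mul1r ?mul0r ?addr0 ?add0r.
Qed.

Lemma cross_nz (p q : vec3 k) : nonzero3 p -> nonzero3 q -> ~ proj_eq q p ->
  exists m, cross p q m != 0.
Proof.
move=> [i0 Hi0] [i1 Hi1] Hnp.
apply/existsP; apply: contraT; rewrite negb_exists => /forallP Hz.
exfalso; apply: Hnp.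
have Hc : forall m, cross p q m = 0 by move=> m; move: (Hz m); rewrite negbK => /eqP.
have key : forall i l, q i * p l = q l * p i.
  move=> i l; apply/eqP; rewrite -subr_eq0; apply/eqP.
  have h0 := Hc o0; have h1 := Hc o1; have h2 := Hc o2.
  move: h0 h1 h2; rewrite /cross /tri /= => h0 h1 h2.
  case: (ord3 i) => [->|[->|->]]; case: (ord3 l) => [->|[->|->]];
  first [ ring
        | by rewrite -h0; ring | by rewrite -h1; ring | by rewrite -h2; ring
        | by rewrite -oppr0 -h0; ring | by rewrite -oppr0 -h1; ring
        | by rewrite -oppr0 -h2; ring ].
have Hq0 : q i0 != 0.
  apply: contraNneq Hi1 => Hq; apply/eqP.
  have := key i1 i0; rewrite Hq mul0r => /eqP; rewrite mulf_eq0 (negbTE Hi0) orbF.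
  by move/eqP.
exists (q i0 / p i0); split; first by rewrite mulf_neq0 // invr_eq0.
move=> i; have := key i i0 => H.
by apply: (mulIf Hi0); rewrite H; field.
Qed.

Lemma bac (u a w : vec3 k) m :
  cross u (cross a w) m = a m * pairing u w - w m * pairing u a.
Proof.
by rewrite /pairing !sum3; case: (ord3 m) => [->|[->|->]]; rewrite /cross /tri /=; ring.
Qed.

Lemma pair_cross_self (a w : vec3 k) : pairing a (cross a w) = 0.
Proof. rewrite /pairing sum3 /cross /tri /=; ring. Qed.

Lemma pairing_sym (a w : vec3 k) : pairing a w = pairing w a.
Proof. rewrite /pairing; apply: eq_bigr => i _; exact: mulrC. Qed.

End Frames.

Section Deriv.
Variable k : closedFieldType.
Local Notation mp := {mpoly k[3]}.
Variables (q x : vec3 k).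

Definition Dd (p : mp) : k := \sum_(m < 3) q m * (p^`M(m)).@[x].

Lemma DdD p r : Dd (p + r) = Dd p + Dd r.
Proof. rewrite /Dd -big_split; apply: eq_bigr => m _ /=; by rewrite mderivD mevalD mulrDr. Qed.

Lemma DdN p : Dd (- p) = - Dd p.
Proof. rewrite /Dd -sumrN; apply: eq_bigr => m _ /=; by rewrite mderivN mevalN mulrN. Qed.

Lemma DdM p r : Dd (p * r) = Dd p * r.@[x] + p.@[x] * Dd r.
Proof.
rewrite /Dd mulr_suml mulr_sumr -big_split; apply: eq_bigr => m _ /=.
rewrite mderivM mevalD !mevalM; ring.
Qed.

Lemma DdC c : Dd c%:MP = 0.
Proof. by rewrite /Dd big1 // => m _; rewrite mderivC meval0 mulr0. Qed.

Lemma DdZ c p : Dd (c *: p) = c * Dd p.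
Proof. rewrite /Dd mulr_sumr; apply: eq_bigr => m _; rewrite mderivZ mevalZ; ring. Qed.

Lemma mderivXU (l m : 'I_3) : ('X_l : mp)^`M(m) = ((l == m)%:R)%:MP.
Proof.
rewrite mderivX mnm1E; case: eqP => [->|_].
  have -> : (U_(m) - U_(m) = 0 :> 'X_{1..3})%MM.
    by apply/mnmP => i; rewrite mnmBE subnn mnmE.
  by rewrite mpolyX0 scale1r.
by rewrite scale0r mpolyC0.
Qed.

Lemma DdL (lam : 'I_3 -> 'I_3 -> k) j : Dd (Lf lam j) = \sum_(m < 3) q m * lam j m.
Proof.
rewrite /Dd; apply: eq_bigr => m _; congr (_ * _).
rewrite /Lf sum3 !mderivD !mderivZ !mderivXU !mevalD !mevalZ !mevalC.
by case: (ord3 m) => [->|[->|->]] /=; ring.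
Qed.

End Deriv.

Lemma Dd0 (k : closedFieldType) (q x : vec3 k) : Dd q x 0 = 0.
Proof. by rewrite -mpolyC0 DdC. Qed.

Lemma Leval_P0 (k : closedFieldType) (P lam : 'I_3 -> 'I_3 -> k) :
  (forall j l, \sum_(m < 3) lam j m * P l m = (j == l)%:R) ->
  forall j, (Lf lam j).@[P o0] = (j == o0)%:R.
Proof. by move=> d1 j; rewrite Leval d1. Qed.

Lemma deriv_B (k : closedFieldType) (P lam : 'I_3 -> 'I_3 -> k) :
  (forall j l, \sum_(m < 3) lam j m * P l m = (j == l)%:R) ->
  forall (t : k) (q : vec3 k), \sum_(m < 3) q m * lam o2 m = 0 ->
  forall i, \sum_(m < 3) q m * ((fiber (FF P lam fA0 fB1 fB2) t i)^`M(m)).@[P o0] = 0.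
Proof.
move=> d1 t q Hq i.
change (Dd q (P o0) (fiber (FF P lam fA0 fB1 fB2) t i) = 0).
have e0 := Leval_P0 d1 o0; have e1 := Leval_P0 d1 o1; have e2 := Leval_P0 d1 o2.
rewrite /= in e0 e1 e2.
have dd2 : Dd q (P o0) (Lf lam o2) = 0 by rewrite DdL.
have HS : forall j, Dd q (P o0) (full fA0 fB1 fB2 j (Lf lam o0) (Lf lam o1) (Lf lam o2) t%:MP) = 0.
  move=> j; case: (ord3 j) => [->|[->|->]]; rewrite /full /fA0 /fB1 /fB2 /tri /=;
  rewrite !(DdD, DdM, DdN, DdC, Dd0) !(mevalM, mevalN, mevalC, meval0) ?e0 ?e1 ?e2 ?dd2; ring.
rewrite /FF fiber_tr /tr sum3 !DdD !DdZ !HS; ring.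
Qed.

Unset Implicit Arguments.
Theorem lemma4p1 (k : closedFieldType) (char0 : [pchar k] =i pred0)
    (p1 : vec3 k) (p2 : bpoint k) :
  nonzero3 p1 -> first_nbhd_or_distinct p1 p2 ->
  exists (F G : fpmap k) (P : vfamily k),
    [/\ bir_family F G, morph_A1_P2 P,
        forall t : k, t != 0 ->
          quadratic_with_base_points (fiber F t) p1 p2 (vfiber P t),
        is_identity_map (fiber F 0) &
        collinear3 p1 p2 (vfiber P 0)].
Proof.
move=> Hp1; case: p2 => [q [Hq Hnq] | a [Ha Hon]].
- have [m Hm] := cross_nz Hp1 Hq Hnq.
  have HD : detv p1 q (@ew k m) != 0 by rewrite det_ew.
  have d1 := frame_dual1 HD; have d2 := frame_dual2 HD.
  set P := Pf p1 q (@ew k m) in d1 d2; set lam := lamf p1 q (@ew k m) in d1 d2.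
  exists (FF P lam fA0 fA1 fA2), (GG P lam fA0 gA1 fA2), (P3 P); split.
  + exact: (bir_FF d1 d2 MfA0 MfA1 MfA2 MfA0 MgA1 MfA2 MhFA MhGA
             HfA0 HfA1 HfA2 HfA0 HgA1 HfA2 compA1 compA2 (@hFA1 k) (@hGA1 k) (@e2A k) (@e2gA k)).
  + exact: morph_P3 d1.
  + move=> t Ht.
    have [Hh Hc Hp Hp3] := quad_generic d1 d2 MfA0 MfA1 MfA2 HfA0 HfA1 HfA2
      (@e0A k) (@p3A k) (@HaA k) (HbA char0) Ht.
    exists 1, (fiber (FF P lam fA0 fA1 fA2) t); split => //.
    * exact: oner_neq0.
    * by move=> i; rewrite mul1r.
    * split => //.
      -- move=> i /=; rewrite -(meval_eq _ (comb_e1 P)) (eval_full d1 MfA0 MfA1 MfA2).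
         by rewrite big1 // => j _; rewrite e1A mulr0.
      -- apply: (@P3_not_P k P lam d1 o1 t _ o0) => //.
         by rewrite /tri /= oner_eq0.
      -- apply: (@P3_not_P k P lam d1 o0 t _ o1) => //.
         by rewrite /tri /= oner_eq0.
  + exact: (ident0 d1 d2 _ _ (@idA)).
  + exists (lam o2); split; [|split; [|split]].
    * apply/existsP; apply: contraT; rewrite negb_exists => /forallP Hz.
      have := d1 o2 o2; rewrite eqxx big1; first by move/eqP; rewrite eq_sym oner_eq0.
      by move=> i _; move: (Hz i); rewrite negbK => /eqP ->; rewrite mul0r.
    * by rewrite /on_line /pairing (d1 o2 o0).
    * by rewrite /on_line /pairing (d1 o2 o1).
    * by rewrite /on_line /pairing lam_P3.
- have [j Hj] := Hp1.
  have [m Hm] := Ha.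
  set v := cross a (@ew k j).
  have Hpe : pairing p1 (@ew k j) = p1 j.
    rewrite /pairing /ew sum3.
    by case: (ord3 j) => [->|[->|->]] /=; rewrite ?mulr1 ?mulr0 ?addr0 ?add0r.
  have Hcr : forall l, cross p1 v l = a l * p1 j.
    move=> l; rewrite /v bac Hpe pairing_sym.
    by move: Hon; rewrite /on_line => ->; rewrite mulr0 subr0.
  have HD : detv p1 v (@ew k m) != 0 by rewrite det_ew Hcr mulf_neq0.
  have d1 := frame_dual1 HD; have d2 := frame_dual2 HD.
  set P := Pf p1 v (@ew k m) in d1 d2; set lam := lamf p1 v (@ew k m) in d1 d2.
  have Hlam2 : forall l, lam o2 l = a l * (p1 j / detv p1 v (@ew k m)).
    by move=> l; rewrite /lam /lamf /tri /= Hcr mulrA.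
  exists (FF P lam fA0 fB1 fB2), (GG P lam fA0 gB1 gB2), (P3 P); split.
  + exact: (bir_FF d1 d2 MfA0 MfB1 MfB2 MfA0 MgB1 MgB2 MhFB MhGB
             HfA0 HfB1 HfB2 HfA0 HgB1 HgB2 compB1 compB2 (@hFB1 k) (@hGB1 k) (@e2B k) (@e2gB k)).
  + exact: morph_P3 d1.
  + move=> t Ht.
    have [Hh Hc Hp Hp3] := quad_generic d1 d2 MfA0 MfB1 MfB2 HfA0 HfB1 HfB2
      (@e0B k) (@p3B k) (@HaB k) (@HbB k) Ht.
    exists 1, (fiber (FF P lam fA0 fB1 fB2) t); split => //.
    * exact: oner_neq0.
    * by move=> i; rewrite mul1r.
    * split => //.
      -- move=> i /=; split; first exact: Hp.
         move=> q' Hq'; apply: (deriv_B d1).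
         under eq_bigr do rewrite Hlam2 mulrA.
         rewrite -mulr_suml; move: Hq'; rewrite /on_line /pairing => H.
         rewrite (eq_bigr (fun l => a l * q' l)) ?H ?mul0r // => l _; exact: mulrC.
      -- apply: (@P3_not_P k P lam d1 o1 t _ o0) => //.
         by rewrite /tri /= oner_eq0.
  + exact: (ident0 d1 d2 _ _ (@idA)).
  + rewrite /collinear3 /on_line /pairing.
    under eq_bigr do rewrite vfiber_P3 /comb sum3 /P /Pf /tri /= mul0r addr0 !mul1r mulrDr.
    rewrite big_split /=.
    move: Hon; rewrite /on_line /pairing => ->; rewrite add0r.
    exact: pair_cross_self.
Qed.
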